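(* Every $d$-variate narrow-sense geometric law is a $d$-variate wide-sense geometric law. For $d=2$ this inclusion is proper: the function $\bar F_{n_1,n_2}=(1/2)^{\max(n_1,n_2)}(2/5)^{\min(n_1,n_2)}$, $n_1,n_2\in\mathbb{N}_0$, is the survival function of an exchangeable bivariate wide-sense geometric law which is not narrow-sense geometric; its correlation coefficient equals $-1/8$.
   Context: $\mathbb{N}_0=\{0,1,\ldots\}$. Narrow-sense geometric law: for $p_I\in[0,1]$, $\emptyset\ne I\subseteq\{1,\ldots,d\}$, with $\prod_{I\ni k}p_I<1$, independent $E_I$ with $\mathbb{P}(E_I>n)=p_I^n$, $\tau_k=\min\{E_I:k\in I\}$. Wide-sense geometric law: for $\tilde p_I\in[0,1]$, $I\subseteq\{1,\ldots,d\}$, $\sum_I\tilde p_I=1$, $\sum_{I\not\ni k}\tilde p_I<1$, run i.i.d. trials with outcome $I$ of probability $\tilde p_I$, $\tilde E_I$ the first trial with outcome $I$, $\tau_k=\min\{\tilde E_I:k\in I\}$. *)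

(* Defs.v *)
From Stdlib Require Import Reals.
From mathcomp Require Import all_boot.

Set Implicit Arguments.
Unset Strict Implicit.
Unset Printing Implicit Defensive.

Local Open Scope R_scope.

(* Narrow-sense parameters (p_I), I a nonempty subset of {1..d} (here 'I_d);
   the value p set0 is irrelevant. *)
Definition narrow_valid (d : nat) (p : {set 'I_d} -> R) : Prop :=
  (forall I : {set 'I_d}, I != set0 -> 0 <= p I <= 1) /\
  (forall k : 'I_d, \big[Rmult/1]_(I : {set 'I_d} | k \in I) p I < 1).

(* Joint survival function P(tau_1 > n_1, ..., tau_d > n_d) of the narrow-sense
   law: tau > n iff E_I > max_{k in I} n_k for all I; by independence this is
   the product of P(E_I > m) = p_I ^ m. *)
Definition narrow_surv (d : nat) (p : {set 'I_d} -> R) (n : 'I_d -> nat) : R :=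
  \big[Rmult/1]_(I : {set 'I_d} | I != set0) (p I ^ (\max_(k in I) n k)%N).

Definition wide_valid (d : nat) (q : {set 'I_d} -> R) : Prop :=
  (forall I : {set 'I_d}, 0 <= q I) /\
  \big[Rplus/0]_(I : {set 'I_d}) q I = 1 /\
  (forall k : 'I_d, \big[Rplus/0]_(I : {set 'I_d} | k \notin I) q I < 1).

(* Joint survival function of the wide-sense law: the event {tau > n} only
   depends on the first N := max_k n_k i.i.d. trials; trial t+1 (t : 'I_N) has
   outcome w t.  tau_k > n_k iff no trial among the first n_k has an outcome
   containing k. *)
Definition wide_surv (d : nat) (q : {set 'I_d} -> R) (n : 'I_d -> nat) : R :=
  \big[Rplus/0]_(w : {ffun 'I_(\max_(k : 'I_d) n k)%N -> {set 'I_d}})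
     ((\big[Rmult/1]_(t : 'I_(\max_(k : 'I_d) n k)%N) q (w t)) *
      (if [forall k : 'I_d, forall t : 'I_(\max_(k : 'I_d) n k)%N,
             (t < n k)%N ==> (k \notin w t)] then 1 else 0)).

Definition Fbar (n1 n2 : nat) : R :=
  (1/2) ^ (maxn n1 n2) * (2/5) ^ (minn n1 n2).

Definition Fbar2 (n : 'I_2 -> nat) : R := Fbar (n ord0) (n ord_max).

(* Probability mass P(tau_1 = n1, tau_2 = n2) of an N_0^2-valued random vector
   with survival function F (inclusion-exclusion; for n1 = 0 or n2 = 0 this
   gives 0, consistent with tau >= 1, i.e. F(-1, .) = F(0, .)). *)
Definition pmf2 (F : nat -> nat -> R) (n1 n2 : nat) : R :=
  F n1.-1 n2.-1 - F n1 n2.-1 - F n1.-1 n2 + F n1 n2.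

(* Iterated double series (used only with nonnegative terms). *)
Definition dsum (f : nat -> nat -> R) (l : R) : Prop :=
  exists g : nat -> R, (forall i, infinite_sum (f i) (g i)) /\ infinite_sum g l.

Definition correlation2 (F : nat -> nat -> R) (rho : R) : Prop :=
  exists m1 m2 s1 s2 c : R,
    dsum (fun i j => INR i * pmf2 F i j) m1 /\
    dsum (fun i j => INR j * pmf2 F i j) m2 /\
    dsum (fun i j => INR i ^ 2 * pmf2 F i j) s1 /\
    dsum (fun i j => INR j ^ 2 * pmf2 F i j) s2 /\
    dsum (fun i j => INR i * INR j * pmf2 F i j) c /\
    0 < s1 - m1 ^ 2 /\ 0 < s2 - m2 ^ 2 /\
    rho = (c - m1 * m2) / sqrt ((s1 - m1 ^ 2) * (s2 - m2 ^ 2)).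

(* Main.v *)
Require Import Defs.
From Stdlib Require Import Reals Lra Lia Psatz.
From HB Require Import structures.
From mathcomp Require Import all_boot.
Set Implicit Arguments.
Unset Strict Implicit.
Unset Printing Implicit Defensive.
Local Open Scope R_scope.

Lemma Rmult_1_l' : left_id 1 Rmult. Proof. by move=> x; rewrite Rmult_1_l. Qed.
Lemma Rplus_0_l' : left_id 0 Rplus. Proof. by move=> x; rewrite Rplus_0_l. Qed.
Lemma RmA : associative Rmult. Proof. by move=> x y z; rewrite Rmult_assoc. Qed.
Lemma RpA : associative Rplus. Proof. by move=> x y z; rewrite Rplus_assoc. Qed.
Lemma RmC : commutative Rmult. Proof. by move=> x y; rewrite Rmult_comm. Qed.
Lemma RpC : commutative Rplus. Proof. by move=> x y; rewrite Rplus_comm. Qed.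
HB.instance Definition _ := Monoid.isComLaw.Build R 1 Rmult RmA RmC Rmult_1_l'.
HB.instance Definition _ := Monoid.isComLaw.Build R 0 Rplus RpA RpC Rplus_0_l'.
Lemma Rmult_0_l' : left_zero 0 Rmult. Proof. by move=> x; rewrite Rmult_0_l. Qed.
Lemma Rmult_0_r' : right_zero 0 Rmult. Proof. by move=> x; rewrite Rmult_0_r. Qed.
HB.instance Definition _ := Monoid.isMulLaw.Build R 0 Rmult Rmult_0_l' Rmult_0_r'.
Lemma Rdl : left_distributive Rmult Rplus. Proof. by move=> x y z; rewrite Rmult_plus_distr_r. Qed.
Lemma Rdr : right_distributive Rmult Rplus. Proof. by move=> x y z; rewrite Rmult_plus_distr_l. Qed.
HB.instance Definition _ := Monoid.isAddLaw.Build R Rmult Rplus Rdl Rdr.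

Lemma test (I J : finType) (F : I -> J -> R) :
  \big[Rmult/1]_(i : I) \big[Rplus/0]_(j : J) F i j
    = \big[Rplus/0]_(f : {ffun I -> J}) \big[Rmult/1]_i F i (f i).
Proof. exact: bigA_distr_bigA. Qed.

Lemma prod_ind (I : finType) (b : pred I) :
  \big[Rmult/1]_(i : I) (if b i then 1 else 0) = if [forall i, b i] then 1 else 0.
Proof.
case: (boolP [forall i, b i]) => [/forallP H|/forallPn [i Hi]].
  by apply: big1 => i _; rewrite H.
by rewrite (bigD1 i) //= (negbTE Hi) Rmult_0_l.
Qed.

Lemma wide_surv_prod d (q : {set 'I_d} -> R) (n : 'I_d -> nat) :
  wide_surv q n = \big[Rmult/1]_(t < \max_(k : 'I_d) n k)
     \big[Rplus/0]_(K : {set 'I_d})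
       (q K * (if [forall k : 'I_d, (t < n k)%N ==> (k \notin K)] then 1 else 0)).
Proof.
rewrite bigA_distr_bigA /wide_surv; apply: eq_bigr => w _.
rewrite big_split /= prod_ind; congr (_ * (if _ then _ else _)).
apply/forallP/forallP => H x.
  apply/forallP => y; by move/forallP: (H y) => /(_ x).
apply/forallP => y; by move/forallP: (H y) => /(_ x).
Qed.
Definition Gw d (p : {set 'I_d} -> R) (I : {set 'I_d}) (c : bool) : R :=
  if I == set0 then (if c then 0 else 1) else (if c then 1 - p I else p I).
Definition qn d (p : {set 'I_d} -> R) (K : {set 'I_d}) : R :=
  \big[Rplus/0]_(f : {ffun {set 'I_d} -> bool} | \bigcup_(I | f I) I == K)
     \big[Rmult/1]_(I : {set 'I_d}) Gw p I (f I).

Lemma key d (p : {set 'I_d} -> R) (a : pred 'I_d) :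
  \big[Rplus/0]_(K : {set 'I_d})
      (qn p K * (if [forall k, a k ==> (k \notin K)] then 1 else 0)) =
  \big[Rmult/1]_(I : {set 'I_d})
      (if (I != set0) && [exists k in I, a k] then p I else 1).
Proof.
have E : forall f : {ffun {set 'I_d} -> bool},
   (if [forall k, a k ==> (k \notin \bigcup_(I | f I) I)] then 1 else 0) =
   \big[Rmult/1]_(I : {set 'I_d})
     (if f I ==> [forall k, a k ==> (k \notin I)] then 1 else 0).
  move=> f; rewrite prod_ind; congr (if _ then _ else _).
  apply/forallP/forallP => H.
    move=> I; apply/implyP => fI; apply/forallP => k; apply/implyP => ak.
    move/implyP: (H k) => /(_ ak).
    by apply: contra => kI; apply/bigcupP; exists I.
  move=> k; apply/implyP => ak; apply/negP => /bigcupP [I fI kI].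
  by move/implyP: (H I) => /(_ fI) /forallP /(_ k) /implyP /(_ ak); rewrite kI.
transitivity (\big[Rplus/0]_(f : {ffun {set 'I_d} -> bool})
   (\big[Rmult/1]_(I : {set 'I_d}) Gw p I (f I) *
    (if [forall k, a k ==> (k \notin \bigcup_(I | f I) I)] then 1 else 0))).
  rewrite (partition_big (fun f : {ffun {set 'I_d} -> bool} => \bigcup_(I | f I) I) predT) //.
  apply: eq_bigr => K _; rewrite /qn big_distrl /=.
  by apply: eq_bigr => f /eqP ->.
transitivity (\big[Rplus/0]_(f : {ffun {set 'I_d} -> bool})
   \big[Rmult/1]_(I : {set 'I_d}) (Gw p I (f I) *
     (if f I ==> [forall k, a k ==> (k \notin I)] then 1 else 0))).
  by apply: eq_bigr => f _; rewrite E -big_split.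
rewrite -(bigA_distr_bigA (fun (I : {set 'I_d}) (c : bool) => Gw p I c *
     (if c ==> [forall k, a k ==> (k \notin I)] then 1 else 0))).
apply: eq_bigr => I _.
rewrite big_bool /= /Gw.
case: (boolP (I == set0)) => [/eqP -> | nI] /=.
  rewrite ?eqxx /=; case: ifP => _; lra.
rewrite ?(negbTE nI) /=.
case: (boolP [exists k in I, a k]) => [/existsP [k /andP [kI ak]] | /existsPn H].
  have -> : [forall k0, a k0 ==> (k0 \notin I)] = false.
    apply/negP => /forallP /(_ k) /implyP /(_ ak); by rewrite kI.
  lra.
have -> : [forall k0, a k0 ==> (k0 \notin I)].
  apply/forallP => k; move: (H k); by case: (k \in I); case: (a k).
lra.
Qed.

Lemma prod_const_nat (c : R) m : \big[Rmult/1]_(0 <= t < m) c = c ^ m.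
Proof.
elim: m => [|m IH]; first by rewrite big_geq.
by rewrite big_nat_recr //= IH Rmult_comm.
Qed.

Lemma prod_lt N m (c : R) : (m <= N)%N ->
  \big[Rmult/1]_(t < N) (if (t < m)%N then c else 1) = c ^ m.
Proof.
move=> H.
rewrite -(big_mkord xpredT (fun t => if (t < m)%N then c else 1)).
rewrite (big_cat_nat (n := m)) //=.
have -> : \big[Rmult/1]_(m <= i < N) (if (i < m)%N then c else 1) =
          1.
  by rewrite big_nat_cond; apply: big1 => i /andP [/andP [mi _] _]; rewrite ltnNge mi.
rewrite Rmult_1_r -prod_const_nat; apply: eq_big_nat => t /andP [_ ->] //.
Qed.

Lemma wide_narrow d (p : {set 'I_d} -> R) (n : 'I_d -> nat) :
  wide_surv (qn p) n = narrow_surv p n.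
Proof.
rewrite wide_surv_prod.
under eq_bigr => t _ do rewrite (key p (fun k => (t < n k)%N)).
rewrite exchange_big /narrow_surv [RHS]big_mkcond /=.
apply: eq_bigr => I _.
case: (boolP (I == set0)) => [_ | nI] /=.
  by rewrite big1.
have lm : (\max_(k in I) n k <= \max_(k : 'I_d) n k)%N.
  by apply/bigmax_leqP => k _; exact: leq_bigmax.
rewrite -(prod_lt _ lm); apply: eq_bigr => t _.
congr (if _ then _ else _).
apply/idP/idP.
  case/existsP => k /andP [kI lt]; apply: leq_trans lt _.
  exact: leq_bigmax_cond.
rewrite ltnNge => H; apply: contraR H => /existsPn Hn.
apply/bigmax_leqP => k kI; move: (Hn k); rewrite kI /= -leqNgt; by [].
Qed.

Lemma sum_ge0 (I : finType) (P : pred I) (F : I -> R) :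
  (forall i, P i -> 0 <= F i) -> 0 <= \big[Rplus/0]_(i | P i) F i.
Proof.
move=> H; elim/big_ind: _ => //; [lra | move=> x y; lra].
Qed.

Lemma prod_ge0 (I : finType) (P : pred I) (F : I -> R) :
  (forall i, P i -> 0 <= F i) -> 0 <= \big[Rmult/1]_(i | P i) F i.
Proof.
move=> H; elim/big_ind: _ => //; [lra | move=> x y; apply: Rmult_le_pos].
Qed.

Lemma part1 d (p : {set 'I_d} -> R) : narrow_valid p ->
  exists q : {set 'I_d} -> R,
    wide_valid q /\ forall n : 'I_d -> nat, wide_surv q n = narrow_surv p n.
Proof.
move=> [Hp Hlt]; exists (qn p); split; last exact: wide_narrow.
split.
  move=> K; apply: sum_ge0 => f _; apply: prod_ge0 => I _.
  rewrite /Gw; case: (boolP (I == set0)) => [_|nI]; first by case: (f I); lra.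
  by have := Hp I nI; case: (f I); lra.
split.
  have := key p pred0.
  have -> : \big[Rmult/1]_(I : {set 'I_d}) (if (I != set0) && [exists k in I, pred0 k] then p I else 1) = 1.
    apply: big1 => I _; case: ifP => // /andP [_ /existsP [k /andP [_ //]]].
  move=> <-; apply: eq_bigr => K _.
  have -> : [forall k, pred0 k ==> (k \notin K)] by apply/forallP.
  lra.
move=> k.
rewrite big_mkcond /=.
have E1 : forall K : {set 'I_d}, [forall k0, pred1 k k0 ==> (k0 \notin K)] = (k \notin K).
  move=> K; apply/forallP/idP => [/(_ k)|H k0]; first by rewrite /= eqxx.
  by apply/implyP => /= /eqP ->.
have -> : \big[Rplus/0]_(K : {set 'I_d}) (if k \notin K then qn p K else 0) =
          \big[Rplus/0]_(K : {set 'I_d}) (qn p K *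
             (if [forall k0, pred1 k k0 ==> (k0 \notin K)] then 1 else 0)).
  by apply: eq_bigr => K _; rewrite E1; case: ifP => _; lra.
rewrite key.
apply: Rle_lt_trans (Hlt k); right.
rewrite [RHS]big_mkcond; apply: eq_bigr => I _.
have -> : (I != set0) && [exists k0 in I, pred1 k k0] = (k \in I).
  apply/idP/idP.
    by case/andP => _ /existsP [k0 /andP [kI /eqP <-]].
  move=> kI; apply/andP; split.
    by apply/eqP => E; move: kI; rewrite E in_set0.
  by apply/existsP; exists k; rewrite kI /=.
by [].
Qed.

Lemma ord2 (i : 'I_2) : i = ord0 \/ i = ord_max.
Proof.
case: i => [[|[|m]] Hi]; [left|right|by []]; exact: val_inj.
Qed.

Lemma e01 : (ord0 == ord_max :> 'I_2) = false. Proof. by []. Qed.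
Lemma e10 : (ord_max == ord0 :> 'I_2) = false. Proof. by []. Qed.

Lemma forall2 (P : pred 'I_2) : [forall k, P k] = P ord0 && P ord_max.
Proof.
apply/forallP/andP => [H|[H0 H1] k]; first by split.
by case: (ord2 k) => ->.
Qed.

Lemma set2_cases (K : {set 'I_2}) :
  K = set0 \/ K = [set ord0] \/ K = [set ord_max] \/ K = setT.
Proof.
case h0: (ord0 \in K); case h1: (ord_max \in K);
  [right; right; right | right; left | right; right; left | left];
  apply/setP => i; case: (ord2 i) => ->;
  by rewrite ?in_set1 ?in_set0 ?in_setT ?h0 ?h1 ?eqxx ?e01 ?e10.
Qed.

Section Big4.
Variables (T : Type) (idx : T) (op : Monoid.com_law idx).
Lemma big4 (g : {set 'I_2} -> T) :
  \big[op/idx]_(K : {set 'I_2}) g K =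
  op (g set0) (op (g [set ord0]) (op (g [set ord_max]) (op (g setT) idx))).
Proof.
have n1 : [set ord0] != set0 :> {set 'I_2}.
  by apply/eqP => /setP /(_ ord0); rewrite in_set1 in_set0 eqxx.
have n2 : [set ord_max] != set0 :> {set 'I_2}.
  by apply/eqP => /setP /(_ ord_max); rewrite in_set1 in_set0 eqxx.
have n3 : setT != set0 :> {set 'I_2}.
  by apply/eqP => /setP /(_ ord_max); rewrite in_setT in_set0.
have n12 : [set ord_max] != [set ord0] :> {set 'I_2}.
  by apply/eqP => /setP /(_ ord_max); rewrite !in_set1 eqxx e10.
have n13 : setT != [set ord0] :> {set 'I_2}.
  by apply/eqP => /setP /(_ ord_max); rewrite !in_set1 in_setT e10.
have n23 : setT != [set ord_max] :> {set 'I_2}.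
  by apply/eqP => /setP /(_ ord0); rewrite !in_set1 in_setT e01.
rewrite (bigD1 set0) //= (bigD1 [set ord0]) //= (bigD1 [set ord_max]) /=; last first.
  by rewrite n2 n12.
rewrite (bigD1 setT) /=; last by rewrite n3 n13 n23.
congr (op _ (op _ (op _ (op _ _)))).
apply: big_pred0 => K.
case: (set2_cases K) => [->|[->|[->|->]]]; by rewrite ?eqxx ?andbF ?andbT ?andFb.
Qed.
End Big4.

Lemma max2 (n : 'I_2 -> nat) : \max_(k : 'I_2) n k = maxn (n ord0) (n ord_max).
Proof.
apply/eqP; rewrite eqn_leq; apply/andP; split.
  by apply/bigmax_leqP => k _; case: (ord2 k) => ->; rewrite ?leq_maxl ?leq_maxr.
by rewrite geq_max !leq_bigmax.
Qed.

Lemma prod_split N m (a b : R) : (m <= N)%N ->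
  \big[Rmult/1]_(t < N) (if (t < m)%N then a else b) = a ^ m * b ^ (N - m).
Proof.
move=> H.
rewrite -(big_mkord xpredT (fun t => if (t < m)%N then a else b)).
rewrite (big_cat_nat (n := m)) //=.
congr (_ * _).
  rewrite -prod_const_nat; apply: eq_big_nat => t /andP [_ ->] //.
rewrite -{1}[m]add0n big_addn -prod_const_nat.
apply: eq_big_nat => t _; by rewrite ltnNge leq_addl.
Qed.

Definition q2 (K : {set 'I_2}) : R :=
  if ord0 \in K then (if ord_max \in K then 1/5 else 3/10)
  else (if ord_max \in K then 3/10 else 1/5).

Lemma part2 : exists q : {set 'I_2} -> R,
       wide_valid q /\ forall n : 'I_2 -> nat, wide_surv q n = Fbar2 n.
Proof.
exists q2; split.
  split.
    by move=> K; rewrite /q2; case: (_ \in K); case: (_ \in K); lra.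
  split.
    rewrite big4 /= /q2 ?in_set1 ?in_set0 ?in_setT ?eqxx ?e01 ?e10 /=; lra.
  move=> k; rewrite big_mkcond big4 /= /q2 ?in_set1 ?in_set0 ?in_setT ?eqxx ?e01 ?e10.
  by case: (ord2 k) => ->; rewrite /= ?in_set1 ?in_set0 ?in_setT ?eqxx ?e01 ?e10 /=; lra.
move=> n.
rewrite wide_surv_prod.
set N := \max_(k : 'I_2) n k.
have HN : N = maxn (n ord0) (n ord_max) by rewrite /N max2.
have Hm : (minn (n ord0) (n ord_max) <= N)%N by rewrite HN leq_max geq_minl.
transitivity (\big[Rmult/1]_(t < N)
   (if (t < minn (n ord0) (n ord_max))%N then 1/5 else 1/2)).
  apply: eq_bigr => t _.
  have Ht : (t < maxn (n ord0) (n ord_max))%N := leq_trans (ltn_ord t) (eq_leq HN).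
  rewrite big4 /= !forall2 /q2 ?in_set1 ?in_set0 ?in_setT ?eqxx ?e01 ?e10 /=.
  move: Ht; rewrite leq_max leq_min.
  case: (t < n ord0)%N; case: (t < n ord_max)%N => //= _; lra.
rewrite prod_split // /Fbar2 /Fbar HN.
have Hmm : (minn (n ord0) (n ord_max) <= maxn (n ord0) (n ord_max))%N.
  by rewrite -HN.
rewrite -{2}(subnKC Hmm).
set a := minn _ _; set k := (_ - _)%N.
rewrite pow_add.
have -> : (1/5 : R) = 1/2 * (2/5) by field.
rewrite Rpow_mult_distr; ring.
Qed.

Lemma Fbar_sym n1 n2 : Fbar n1 n2 = Fbar n2 n1.
Proof. by rewrite /Fbar maxnC minnC. Qed.

Lemma part4 : ~ (exists p : {set 'I_2} -> R,
        narrow_valid p /\ forall n : 'I_2 -> nat, narrow_surv p n = Fbar2 n).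
Proof.
move=> [p [[Hp _] H]].
have NS : forall n : 'I_2 -> nat, narrow_surv p n =
   p [set ord0] ^ n ord0 * p [set ord_max] ^ n ord_max * p setT ^ maxn (n ord0) (n ord_max).
  move=> n; rewrite /narrow_surv big_mkcond big4 /= eqxx.
  have n1 : [set ord0] != set0 :> {set 'I_2}.
    by apply/eqP => /setP /(_ ord0); rewrite in_set1 in_set0 eqxx.
  have n2 : [set ord_max] != set0 :> {set 'I_2}.
    by apply/eqP => /setP /(_ ord_max); rewrite in_set1 in_set0 eqxx.
  have n3 : setT != set0 :> {set 'I_2}.
    by apply/eqP => /setP /(_ ord_max); rewrite in_setT in_set0.
  rewrite n1 n2 n3 !big_set1.
  have -> : \max_(k in [set: 'I_2]) n k = maxn (n ord0) (n ord_max).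
    rewrite -max2; apply: eq_bigl => k; by rewrite in_setT.
  rewrite /=; ring.
have A := H (fun k => if k == ord0 then 1%N else 0%N).
have B := H (fun k => if k == ord0 then 0%N else 1%N).
have C := H (fun k => 1%N).
rewrite NS /Fbar2 /= ?eqxx ?e10 /Fbar /= in A.
rewrite NS /Fbar2 /= ?eqxx ?e10 /Fbar /= in B.
rewrite NS /Fbar2 /Fbar /= in C.
move: A B C => A B C.
have n3 : setT != set0 :> {set 'I_2}.
  by apply/eqP => /setP /(_ ord_max); rewrite in_setT in_set0.
have := Hp _ n3.
set a := p [set ord0] in A B C; set b := p [set ord_max] in A B C; set c := p setT in A B C.
move=> Hc.
rewrite /c in Hc; fold c in Hc.
have B' : b * c = 1/2 by lra.
have A' : a * c = 1/2 by lra.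
have C' : a * (b * c) = 1/5 by lra.
rewrite B' in C'.
have Ha : a = 2/5 by lra.
rewrite Ha in A'; lra.
Qed.

From Stdlib Require Import FunctionalExtensionality.

Lemma isum_ext (a b : nat -> R) l :
  (forall n, a n = b n) -> infinite_sum a l -> infinite_sum b l.
Proof.
move=> E; have -> : b = a by apply: functional_extensionality => n; rewrite E.
done.
Qed.

Lemma tele (Phi : nat -> R) : Un_cv Phi 0 ->
  infinite_sum (fun j => Phi (j.-1) - Phi j) (Phi 0%N).
Proof.
move=> H.
have Hs : forall n, sum_f_R0 (fun j => Phi (j.-1) - Phi j) n = Phi 0%N - Phi n.
  elim=> [|n IH] /=; first by [].
  rewrite IH; ring.
move=> eps He; case: (H eps He) => N HN; exists N => n Hn.
rewrite Hs /R_dist; have := HN n Hn; rewrite /R_dist.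
by rewrite Rminus_0_r -Rabs_Ropp; congr (Rabs _ < _); ring.
Qed.

Lemma sbp (h D T : nat -> R) :
  (forall j, T j - T (S j) = (h (S j) - h j) * D j) ->
  Un_cv (fun j => h j * D j + T j) 0 ->
  infinite_sum (fun j => h j * (D (j.-1) - D j)) (h 0%N * D 0%N + T 0%N).
Proof.
move=> HT Hc.
apply: isum_ext (tele Hc) => -[|j] /=; first ring.
have := HT j; lra.
Qed.

Definition M (n : nat) : R := (INR n ^ 2 + 1) * (1/2) ^ n.

Lemma pow2_ge1 n : 1 <= 2 ^ n.
Proof. elim: n => [|n IH] /=; lra. Qed.

Lemma poly_bound n : (INR n ^ 2 + 1) * (INR n + 1) <= 4096 * 2 ^ n.
Proof.
elim: n => [|n IH]; first by rewrite /=; lra.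
rewrite S_INR /=.
have H1 := pow2_ge1 n.
have H0 := pos_INR n.
case: (leqP 4 n) => h.
  have h4 : 4 <= INR n by have := le_INR _ _ (elimT leP h); rewrite /=; lra.
  have : INR n ^ 2 * (INR n - 4) >= 0 by nra.
  move: IH; rewrite /=; nra.
have h3 : INR n <= 3.
  by have := le_INR n 3 (elimT leP (h : (n <= 3)%N)); rewrite /=; lra.
nra.
Qed.

Lemma M_ge0 n : 0 <= M n.
Proof.
rewrite /M; apply: Rmult_le_pos; first by have := pos_INR n; rewrite /=; nra.
apply: pow_le; lra.
Qed.

Lemma M_le n : M n * (INR n + 1) <= 4096.
Proof.
have Hb : (1/2) ^ n * 2 ^ n = 1.
  rewrite -Rpow_mult_distr.
  have -> : 1/2 * 2 = 1 by field.
  by rewrite pow1.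
have h3 := poly_bound n. have h2 : 0 <= (1/2)^n by apply: pow_le; lra.
rewrite /M.
have : (INR n ^ 2 + 1) * (INR n + 1) * (1/2)^n <= 4096 * 2 ^ n * (1/2)^n.
  by apply: Rmult_le_compat_r.
have -> : 4096 * 2 ^ n * (1 / 2) ^ n = 4096 by rewrite Rmult_assoc (Rmult_comm (2^n)) Hb; ring.
move=> H; apply: Rle_trans H; right; ring.
Qed.

Lemma M_cv : Un_cv M 0.
Proof.
move=> eps He.
case: (INR_unbounded (4096 / eps)) => N HN.
exists N => n Hn; rewrite /R_dist Rminus_0_r Rabs_pos_eq; last exact: M_ge0.
have Hn' : INR N <= INR n by apply: le_INR.
have h1 := M_le n; have h2 := M_ge0 n; have h3 := pos_INR n.
have : 4096 < eps * (INR n + 1).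
  have : 4096 / eps * eps = 4096 by field; lra.
  nra.
nra.
Qed.

Lemma sq_ev (u : nat -> R) N C :
  (forall n, (N <= n)%N -> Rabs (u n) <= C * M n) -> Un_cv u 0.
Proof.
move=> H eps He.
set C' := Rabs C + 1.
have HC : 0 < C' by have := Rabs_pos C; rewrite /C'; lra.
have Hp : eps / C' > 0 by apply: Rdiv_lt_0_compat.
case: (M_cv Hp) => N1 HN1.
exists (maxn N N1) => n Hn.
have Hn1 : (n >= N1)%coq_nat.
  by apply/leP; apply: leq_trans (leq_maxr N N1) _; apply/leP.
have Hn0 : (N <= n)%N by apply: leq_trans (leq_maxl N N1) _; apply/leP.
have := HN1 n Hn1; rewrite /R_dist Rminus_0_r Rabs_pos_eq; last exact: M_ge0.
move=> h; rewrite /R_dist Rminus_0_r.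
have := H n Hn0; have := M_ge0 n; have := Rle_abs C.
have : C' * (eps / C') = eps by field; lra.
rewrite /C' => e1 e2 e3 e4.
have : C' * M n < eps by rewrite -e1; apply: Rmult_lt_compat_l.
rewrite /C'; nra.
Qed.

Lemma bndM (u : nat -> R) N C :
  (forall j, (N <= j)%N -> Rabs (u j) <= C * ((INR j ^ 2 + 1) * (1/2) ^ j)) ->
  Un_cv u 0.
Proof. by move=> H; apply: (sq_ev (N := N) (C := C)). Qed.

Lemma pow01 c n : 0 <= c <= 1 -> 0 <= c ^ n <= 1.
Proof. move=> Hc; elim: n => [|n IH] /=; nra. Qed.

Lemma pow_mono c m n : 0 <= c <= 1 -> (m <= n)%N -> c ^ n <= c ^ m.
Proof.
move=> Hc h; rewrite -(subnKC h) pow_add.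
have := pow01 m Hc; have := pow01 (n - m) Hc; nra.
Qed.

Lemma FbE i j : Fbar i j =
  if (i <= j)%N then (2/5) ^ i * (1/2) ^ j else (1/2) ^ i * (2/5) ^ j.
Proof.
rewrite /Fbar; case: (leqP i j) => h.
  ring.
by [].
Qed.

Lemma Fb_bd a j : 0 <= Fbar a j <= (1/2) ^ j.
Proof.
have hx : 0 <= 1/2 <= 1 by lra.
have hy : 0 <= 2/5 <= 1 by lra.
rewrite FbE; case: (leqP a j) => h.
  have := pow01 a hy; have := pow01 j hx; nra.
have := pow_mono hx (ltnW h); have := pow01 a hx; have := pow01 j hy; nra.
Qed.

Definition Phi1 i j : R :=
  if (i <= j)%N then 2 * ((2/5) ^ i * (1/2) ^ j)
  else 5/3 * ((1/2) ^ i * (2/5) ^ j) + 1/3 * ((1/2) ^ i * (2/5) ^ i).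

Definition Psi i j : R :=
  if (i <= j)%N then (2/5) ^ i * (1/2) ^ j * (4 * INR j + 6)
  else (1/2) ^ i * (2/5) ^ j * (30 * INR j + 35) / 9
       + (1/2) ^ i * (2/5) ^ i * (6 * INR i + 19) / 9.

Lemma E1 i j : Fbar i j = Phi1 i j - Phi1 i j.+1.
Proof.
rewrite FbE /Phi1; case: (leqP i j) => h.
  rewrite (leqW h) -tech_pow_Rmult; field.
case: (leqP i j.+1) => h2.
  have E : i = j.+1 by apply/eqP; rewrite eqn_leq h2 h.
  subst i; rewrite -!tech_pow_Rmult; field.
rewrite -!tech_pow_Rmult; field.
Qed.

Lemma E2 i j : (2 * INR j + 1) * Fbar i j = Psi i j - Psi i j.+1.
Proof.
rewrite FbE /Psi S_INR; case: (leqP i j) => h.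
  rewrite (leqW h) -tech_pow_Rmult; field.
case: (leqP i j.+1) => h2.
  have E : i = j.+1 by apply/eqP; rewrite eqn_leq h2 h.
  subst i; rewrite S_INR -!tech_pow_Rmult; field.
rewrite -!tech_pow_Rmult; field.
Qed.

Definition Dd i j : R := Fbar (i.-1) j - Fbar i j.

Lemma pmf2E i j : pmf2 Fbar i j = Dd i (j.-1) - Dd i j.
Proof. rewrite /pmf2 /Dd; ring. Qed.

Lemma absD i j : Rabs (Dd i j) <= 2 * (1/2) ^ j.
Proof.
apply: Rabs_le; have := Fb_bd (i.-1) j; have := Fb_bd i j; rewrite /Dd; lra.
Qed.

Lemma isum_val (a : nat -> R) l l' : infinite_sum a l -> l = l' -> infinite_sum a l'.
Proof. by move=> H <-. Qed.

Lemma Phi1_up i j : (i <= j)%N -> Phi1 i j = 2 * ((2/5) ^ i * (1/2) ^ j).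
Proof. by rewrite /Phi1 => ->. Qed.

Lemma Psi_up i j : (i <= j)%N -> Psi i j = (2/5) ^ i * (1/2) ^ j * (4 * INR j + 6).
Proof. by rewrite /Psi => ->. Qed.

Lemma sbp' (h D T f : nat -> R) l :
  (forall j, f j = h j * (D (j.-1) - D j)) ->
  (forall j, T j - T (S j) = (h (S j) - h j) * D j) ->
  (exists N C, forall j, (N <= j)%N ->
      Rabs (h j * D j + T j) <= C * ((INR j ^ 2 + 1) * (1/2) ^ j)) ->
  h 0%N * D 0%N + T 0%N = l ->
  infinite_sum f l.
Proof.
move=> Hf HT [N [C HB]] <-.
apply: isum_ext (sbp HT (bndM HB)) => j; by rewrite Hf.
Qed.

Lemma Dbd i j : - (2 * (1/2) ^ j) <= Dd i j <= 2 * (1/2) ^ j.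
Proof. have := Fb_bd (i.-1) j; have := Fb_bd i j; rewrite /Dd; lra. Qed.

Lemma Xpos j : 0 <= (1/2) ^ j.
Proof. apply: pow_le; lra. Qed.

Lemma ypow a : 0 <= (2/5) ^ a <= 1.
Proof. apply: pow01; lra. Qed.

Lemma Fb0 i : 0 <= Fbar i 0 <= (1/2) ^ i.
Proof. rewrite Fbar_sym; exact: Fb_bd. Qed.

Lemma Phi1_0 i : (0 < i)%N ->
  Phi1 i 0 = 5/3 * (1/2) ^ i + 1/3 * ((1/2) ^ i * (2/5) ^ i).
Proof. rewrite /Phi1 leqn0 => /lt0n_neq0 /negbTE ->; rewrite /=; ring. Qed.

Lemma Psi_0 i : (0 < i)%N ->
  Psi i 0 = (1/2) ^ i * 35 / 9 + (1/2) ^ i * (2/5) ^ i * (6 * INR i + 19) / 9.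
Proof. rewrite /Psi leqn0 => /lt0n_neq0 /negbTE ->; rewrite /=; field. Qed.

Lemma in_m1 i : infinite_sum (fun j => INR i * pmf2 Fbar i j) (INR i * Dd i 0).
Proof.
apply: (sbp' (h := fun _ => INR i) (D := Dd i) (T := fun _ => 0)).
- by move=> j; rewrite pmf2E.
- move=> j; ring.
- exists 0%N, (2 * INR i) => j _.
  rewrite Rplus_0_r; apply: Rabs_le.
  have := Dbd i j; have := pos_INR i; have := pos_INR j; have := Xpos j.
  move=> h1 h2 h3 h4.
  have hX1 : (1/2)^j <= (INR j ^ 2 + 1) * (1/2)^j.
    have : 0 <= INR j ^ 2 * (1/2)^j by apply: Rmult_le_pos => //; nra.
    lra.
  have e1 : 0 <= INR i * (2 * (1/2)^j - Dd i j) by apply: Rmult_le_pos; lra.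
  have e2 : 0 <= INR i * (2 * (1/2)^j + Dd i j) by apply: Rmult_le_pos; lra.
  have e3 : 0 <= INR i * ((INR j ^ 2 + 1) * (1/2)^j - (1/2)^j) by apply: Rmult_le_pos; lra.
  split; nra.
- ring.
Qed.

Lemma in_s1 i : infinite_sum (fun j => INR i ^ 2 * pmf2 Fbar i j) (INR i ^ 2 * Dd i 0).
Proof.
apply: (sbp' (h := fun _ => INR i ^ 2) (D := Dd i) (T := fun _ => 0)).
- by move=> j; rewrite pmf2E.
- move=> j; ring.
- exists 0%N, (2 * INR i ^ 2) => j _.
  rewrite Rplus_0_r; apply: Rabs_le.
  have := Dbd i j; have := pos_INR i; have := pos_INR j; have := Xpos j.
  move=> h1 h2 h3 h4.
  have h5 : 0 <= INR i ^ 2 by nra.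
  have hX1 : (1/2)^j <= (INR j ^ 2 + 1) * (1/2)^j.
    have : 0 <= INR j ^ 2 * (1/2)^j by apply: Rmult_le_pos => //; nra.
    lra.
  have e1 : 0 <= INR i ^ 2 * (2 * (1/2)^j - Dd i j) by apply: Rmult_le_pos; lra.
  have e2 : 0 <= INR i ^ 2 * (2 * (1/2)^j + Dd i j) by apply: Rmult_le_pos; lra.
  have e3 : 0 <= INR i ^ 2 * ((INR j ^ 2 + 1) * (1/2)^j - (1/2)^j) by apply: Rmult_le_pos; lra.
  split; nra.
- ring.
Qed.

Lemma in_m2 i : infinite_sum (fun j => INR j * pmf2 Fbar i j)
   (Phi1 (i.-1) 0 - Phi1 i 0).
Proof.
apply: (sbp' (h := fun j => INR j) (D := Dd i)
   (T := fun j => Phi1 (i.-1) j - Phi1 i j)).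
- by move=> j; rewrite pmf2E.
- move=> j; rewrite /Dd (E1 (i.-1) j) (E1 i j) S_INR; ring.
- exists i, 6 => j hj.
  rewrite (Phi1_up hj) (Phi1_up (leq_trans (leq_pred i) hj)).
  apply: Rabs_le.
  have := Dbd i j; have := pos_INR j; have := Xpos j.
  have := ypow i; have := ypow (i.-1).
  set X := (1/2)^j; set J := INR j; set a := (2/5)^i; set b := (2/5)^(i.-1).
  move=> hb ha hX hJ hD.
  have e1 : 0 <= J * (2 * X - Dd i j) by apply: Rmult_le_pos; lra.
  have e2 : 0 <= J * (2 * X + Dd i j) by apply: Rmult_le_pos; lra.
  have e3 : 0 <= (J ^ 2 - J + 1) * X by apply: Rmult_le_pos; nra.
  have e4 : 0 <= J ^ 2 * X by apply: Rmult_le_pos; nra.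
  have e5 : 0 <= (1 - a) * X by apply: Rmult_le_pos; lra.
  have e6 : 0 <= (1 - b) * X by apply: Rmult_le_pos; lra.
  have e7 : 0 <= a * X by apply: Rmult_le_pos; lra.
  have e8 : 0 <= b * X by apply: Rmult_le_pos; lra.
  split; nra.
- rewrite /=; ring.
Qed.

Lemma in_c i : infinite_sum (fun j => INR i * INR j * pmf2 Fbar i j)
   (INR i * (Phi1 (i.-1) 0 - Phi1 i 0)).
Proof.
apply: (sbp' (h := fun j => INR i * INR j) (D := Dd i)
   (T := fun j => INR i * (Phi1 (i.-1) j - Phi1 i j))).
- by move=> j; rewrite pmf2E.
- move=> j; rewrite /Dd (E1 (i.-1) j) (E1 i j) S_INR; ring.
- exists i, (6 * INR i) => j hj.
  rewrite (Phi1_up hj) (Phi1_up (leq_trans (leq_pred i) hj)).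
  apply: Rabs_le.
  have := Dbd i j; have := pos_INR j; have := Xpos j; have := pos_INR i.
  have := ypow i; have := ypow (i.-1).
  set X := (1/2)^j; set J := INR j; set I := INR i; set a := (2/5)^i; set b := (2/5)^(i.-1).
  move=> hb ha hI hX hJ hD.
  have e1 : 0 <= J * (2 * X - Dd i j) by apply: Rmult_le_pos; lra.
  have e2 : 0 <= J * (2 * X + Dd i j) by apply: Rmult_le_pos; lra.
  have e3 : 0 <= (J ^ 2 - J + 1) * X by apply: Rmult_le_pos; nra.
  have e4 : 0 <= J ^ 2 * X by apply: Rmult_le_pos; nra.
  have e5 : 0 <= (1 - a) * X by apply: Rmult_le_pos; lra.
  have e6 : 0 <= (1 - b) * X by apply: Rmult_le_pos; lra.
  have e7 : 0 <= a * X by apply: Rmult_le_pos; lra.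
  have e8 : 0 <= b * X by apply: Rmult_le_pos; lra.
  have B : - (6 * ((J ^ 2 + 1) * X)) <= J * Dd i j + (2 * (b * X) - 2 * (a * X))
           <= 6 * ((J ^ 2 + 1) * X) by split; nra.
  rewrite -/I.
  have f1 : 0 <= I * (6 * ((J ^ 2 + 1) * X) - (J * Dd i j + (2 * (b * X) - 2 * (a * X)))).
    apply: Rmult_le_pos; lra.
  have f2 : 0 <= I * (6 * ((J ^ 2 + 1) * X) + (J * Dd i j + (2 * (b * X) - 2 * (a * X)))).
    apply: Rmult_le_pos; lra.
  split; nra.
- rewrite /=; ring.
Qed.

Lemma in_s2 i : infinite_sum (fun j => INR j ^ 2 * pmf2 Fbar i j)
   (Psi (i.-1) 0 - Psi i 0).
Proof.
apply: (sbp' (h := fun j => INR j ^ 2) (D := Dd i)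
   (T := fun j => Psi (i.-1) j - Psi i j)).
- by move=> j; rewrite pmf2E.
- move=> j.
  have -> : Psi i.-1 j - Psi i j - (Psi i.-1 j.+1 - Psi i j.+1) =
            (Psi i.-1 j - Psi i.-1 j.+1) - (Psi i j - Psi i j.+1) by ring.
  rewrite -!E2 /Dd S_INR; ring.
- exists i, 22 => j hj.
  rewrite (Psi_up hj) (Psi_up (leq_trans (leq_pred i) hj)).
  apply: Rabs_le.
  have := Dbd i j; have := pos_INR j; have := Xpos j.
  have := ypow i; have := ypow (i.-1).
  set X := (1/2)^j; set J := INR j; set a := (2/5)^i; set b := (2/5)^(i.-1).
  move=> hb ha hX hJ hD.
  have hJ2 : 0 <= J ^ 2 by nra.
  have e1 : 0 <= J ^ 2 * (2 * X - Dd i j) by apply: Rmult_le_pos; lra.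
  have e2 : 0 <= J ^ 2 * (2 * X + Dd i j) by apply: Rmult_le_pos; lra.
  have e3 : 0 <= (10 * J ^ 2 - 4 * J + 4) * X by apply: Rmult_le_pos; nra.
  have e4 : 0 <= J ^ 2 * X by apply: Rmult_le_pos; nra.
  have e5 : 0 <= (1 - a) * X * (4 * J + 6) by apply: Rmult_le_pos; [apply: Rmult_le_pos|]; lra.
  have e6 : 0 <= (1 - b) * X * (4 * J + 6) by apply: Rmult_le_pos; [apply: Rmult_le_pos|]; lra.
  have e7 : 0 <= a * X * (4 * J + 6) by apply: Rmult_le_pos; [apply: Rmult_le_pos|]; lra.
  have e8 : 0 <= b * X * (4 * J + 6) by apply: Rmult_le_pos; [apply: Rmult_le_pos|]; lra.
  split; nra.
- rewrite /=; ring.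
Qed.

Lemma Phi1_00 : Phi1 0 0 = 2. Proof. rewrite /Phi1 /=; ring. Qed.
Lemma Psi_00 : Psi 0 0 = 6. Proof. rewrite /Psi /=; ring. Qed.

Lemma out_m1 : infinite_sum (fun i => INR i * Dd i 0) 2.
Proof.
apply: (sbp' (h := fun i => INR i) (D := fun i => Fbar i 0) (T := fun i => Phi1 0 i)).
- by move=> i.
- move=> i; rewrite -E1 Fbar_sym S_INR; ring.
- exists 0%N, 3 => i _.
  rewrite (Phi1_up (leq0n i)) /=.
  apply: Rabs_le.
  have := Fb0 i; have := pos_INR i; have := Xpos i.
  set X := (1/2)^i; set I := INR i => hX hI hF.
  have e1 : 0 <= I * (X - Fbar i 0) by apply: Rmult_le_pos; lra.
  have e2 : 0 <= I * Fbar i 0 by apply: Rmult_le_pos; lra.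
  have e3 : 0 <= (I ^ 2 - I + 1) * X by apply: Rmult_le_pos; nra.
  have e4 : 0 <= I ^ 2 * X by apply: Rmult_le_pos; nra.
  split; nra.
- by rewrite Phi1_00 /=; ring.
Qed.

Lemma out_s1 : infinite_sum (fun i => INR i ^ 2 * Dd i 0) 6.
Proof.
apply: (sbp' (h := fun i => INR i ^ 2) (D := fun i => Fbar i 0) (T := fun i => Psi 0 i)).
- by move=> i.
- move=> i; rewrite -E2 Fbar_sym S_INR; ring.
- exists 0%N, 11 => i _.
  rewrite (Psi_up (leq0n i)) /=.
  apply: Rabs_le.
  have := Fb0 i; have := pos_INR i; have := Xpos i.
  set X := (1/2)^i; set I := INR i => hX hI hF.
  have h2 : 0 <= I ^ 2 by nra.
  have e1 : 0 <= I ^ 2 * (X - Fbar i 0) by apply: Rmult_le_pos; lra.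
  have e2 : 0 <= I ^ 2 * Fbar i 0 by apply: Rmult_le_pos; lra.
  have e3 : 0 <= (I ^ 2 - I + 1) * X by apply: Rmult_le_pos; nra.
  have e4 : 0 <= I ^ 2 * X by apply: Rmult_le_pos; nra.
  have e5 : 0 <= I * X by apply: Rmult_le_pos; nra.
  split; nra.
- by rewrite Psi_00 /=; ring.
Qed.

Lemma out_m2 : infinite_sum (fun i => Phi1 (i.-1) 0 - Phi1 i 0) 2.
Proof.
apply: (sbp' (h := fun _ => 1) (D := fun i => Phi1 i 0) (T := fun _ => 0)).
- move=> i; ring.
- move=> i; ring.
- exists 1%N, 2 => i hi.
  rewrite (Phi1_0 hi).
  apply: Rabs_le.
  have := ypow i; have := pos_INR i; have := Xpos i.
  set X := (1/2)^i; set I := INR i; set a := (2/5)^i => hX hI ha.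
  have e3 : 0 <= I ^ 2 * X by apply: Rmult_le_pos; nra.
  have e7 : 0 <= a * X by apply: Rmult_le_pos; lra.
  have e5 : 0 <= (1 - a) * X by apply: Rmult_le_pos; lra.
  split; nra.
- by rewrite Phi1_00; ring.
Qed.

Lemma out_s2 : infinite_sum (fun i => Psi (i.-1) 0 - Psi i 0) 6.
Proof.
apply: (sbp' (h := fun _ => 1) (D := fun i => Psi i 0) (T := fun _ => 0)).
- move=> i; ring.
- move=> i; ring.
- exists 1%N, 7 => i hi.
  rewrite (Psi_0 hi).
  apply: Rabs_le.
  have := ypow i; have := pos_INR i; have := Xpos i.
  set X := (1/2)^i; set I := INR i; set a := (2/5)^i => hX hI ha.
  have e3 : 0 <= I ^ 2 * X by apply: Rmult_le_pos; nra.
  have e7 : 0 <= a * X * (6 * I + 19) by apply: Rmult_le_pos; [apply: Rmult_le_pos|]; lra.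
  have e5 : 0 <= (1 - a) * X * (6 * I + 19) by apply: Rmult_le_pos; [apply: Rmult_le_pos|]; lra.
  have e6 : 0 <= (7 * I ^ 2 - 2/3 * I + 1) * X by apply: Rmult_le_pos; nra.
  split; nra.
- by rewrite Psi_00; ring.
Qed.

Lemma out_c : infinite_sum (fun i => INR i * (Phi1 (i.-1) 0 - Phi1 i 0)) (15/4).
Proof.
apply: (sbp' (h := fun i => INR i) (D := fun i => Phi1 i 0)
   (T := fun i => 10/3 * (1/2) ^ i + 5/12 * ((1/2) ^ i * (2/5) ^ i))).
- by move=> i.
- case=> [|i].
    rewrite Phi1_00 /=; field.
  rewrite (Phi1_0 (ltn0Sn i)) !S_INR -!tech_pow_Rmult; field.
- exists 1%N, 6 => i hi.
  rewrite (Phi1_0 hi).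
  apply: Rabs_le.
  have := ypow i; have := pos_INR i; have := Xpos i.
  set X := (1/2)^i; set I := INR i; set a := (2/5)^i => hX hI ha.
  have e3 : 0 <= I ^ 2 * X by apply: Rmult_le_pos; nra.
  have e7 : 0 <= a * X by apply: Rmult_le_pos; lra.
  have e5 : 0 <= (1 - a) * X by apply: Rmult_le_pos; lra.
  have e8 : 0 <= I * a * X by apply: Rmult_le_pos; [apply: Rmult_le_pos|]; lra.
  have e9 : 0 <= I * (1 - a) * X by apply: Rmult_le_pos; [apply: Rmult_le_pos|]; lra.
  have e6 : 0 <= (I ^ 2 - I + 1) * X by apply: Rmult_le_pos; nra.
  split; nra.
- rewrite /=; field.
Qed.

Lemma corr : correlation2 Fbar (Ropp (Rdiv 1 8)).
Proof.
exists 2, 2, 6, 6, (15/4).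
split; first by exists (fun i => INR i * Dd i 0); split; [exact: in_m1 | exact: out_m1].
split; first by exists (fun i => Phi1 (i.-1) 0 - Phi1 i 0); split; [exact: in_m2 | exact: out_m2].
split; first by exists (fun i => INR i ^ 2 * Dd i 0); split; [exact: in_s1 | exact: out_s1].
split; first by exists (fun i => Psi (i.-1) 0 - Psi i 0); split; [exact: in_s2 | exact: out_s2].
split; first by exists (fun i => INR i * (Phi1 (i.-1) 0 - Phi1 i 0)); split; [exact: in_c | exact: out_c].
split; first by rewrite /=; lra.
split; first by rewrite /=; lra.
have -> : (6 - 2 ^ 2) * (6 - 2 ^ 2) = 2 * 2 by rewrite /=; ring.
rewrite sqrt_square; last lra.
rewrite /=; field.
Qed.

Local Close Scope R_scope.

Theorem mainTheorem11 :
  (forall (d : nat) (p : {set 'I_d} -> R),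
      narrow_valid p ->
      exists q : {set 'I_d} -> R,
        wide_valid q /\ forall n : 'I_d -> nat, wide_surv q n = narrow_surv p n)
  /\
  ((exists q : {set 'I_2} -> R,
       wide_valid q /\ forall n : 'I_2 -> nat, wide_surv q n = Fbar2 n) /\
   (forall n1 n2 : nat, Fbar n1 n2 = Fbar n2 n1) /\
   ~ (exists p : {set 'I_2} -> R,
        narrow_valid p /\ forall n : 'I_2 -> nat, narrow_surv p n = Fbar2 n) /\
   correlation2 Fbar (Ropp (Rdiv 1 8))).
Proof.
split; first exact: part1.
split; first exact: part2.
split; first exact: Fbar_sym.
split; first exact: part4.
exact: corr.
Qed.
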